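(* Assume (A1), (A2), (A3) below, let $r\in\mathcal R_\epsilon$, $x_0\in\mathcal D_x(r)$, let $p$ be the fixed planned path, and consider the closed-loop PathFG+MPC trajectory $s_{k+1}=g(\tilde\xi_N^*(x_k,s_k))$, $x_{k+1}=f(x_k,\tilde\kappa(x_k,s_k))$ from an initial condition $(x_0,s_0)\in\tilde\Gamma$. Then there is $k_M\ge0$ such that $s_k=1$ for all $k\ge k_M+1$.
   Context: System: $x_{k+1}=f(x_k,u_k)$, $x_k\in\mathbb R^{n_x}$, $u_k\in\mathbb R^{n_u}$, with $\mathcal X=\{x:h_x(x)\le0\}$, $\mathcal U=\{u:h_u(u)\le0\}$. (A1) $f$ is locally Lipschitz, $h_x,h_u$ are continuous, and there are a set $\mathcal R\subseteq\mathbb R^{n_r}$ and continuous maps $r\mapsto\bar x_r\in\mathcal X$, $r\mapsto\bar u_r\in\mathcal U$ with $\bar x_r=f(\bar x_r,\bar u_r)$. For fixed $\epsilon>0$, $\mathcal R_\epsilon=\{r\in\mathcal R:h_x(\bar x_r)\le-\epsilon,\ h_u(\bar u_r)\le-\epsilon\}$. MPC: horizon $N\in\mathbb N_{>0}$, stage cost $\ell:\mathcal X\times\mathcal U\times\mathcal R_\epsilon\to\mathbb R_{\ge0}$, terminal set $\mathcal T\subseteq\mathcal X\times\mathcal R$, terminal cost $V:\mathcal T\to\mathbb R_{\ge0}$. The OCP at $(x,r)$: minimize $V(\xi_N,r)+\sum_{i=0}^{N-1}\ell(\xi_i,\mu_i,r)$ subject to $\xi_0=x$, $\xi_{i+1}=f(\xi_i,\mu_i)$,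 $\xi_i\in\mathcal X$, $\mu_i\in\mathcal U$ ($i=0,\dots,N-1$), $(\xi_N,r)\in\mathcal T$. $\Gamma=\{(x,r)\in\mathcal X\times\mathcal R_\epsilon:$ OCP feasible$\}$; $\zeta^*(x,r)=(\xi_0^*,\dots,\xi_N^*,\mu_0^*,\dots,\mu_{N-1}^* )$ is the minimizer (treated as a function), $\xi_N^*(x,r)$ its final state, $\kappa(x,r)=\mu_0^*(x,r)$. (A2) (a) $\ell$ uniformly continuous, $\ell(\bar x_r,\bar u_r,r)=0$, $\ell(x,u,r)\ge\gamma_\ell(\|x-\bar x_r\|)$ for some $\gamma_\ell\in\mathcal K_\infty$, all $(x,r)\in\Gamma$, $u\in\mathcal U$. (b) $V$ uniformly continuous, $V(\bar x_r,r)=0$, $V\ge0$ on $\mathcal T$, and some $\kappa_T:\mathcal T\to\mathcal U$ satisfies $V(f(x,\kappa_T(x,r)),r)-V(x,r)\le-\ell(x,\kappa_T(x,r),r)$ on $\mathcal T$. (c) $(x,r)\in\mathcal T\Rightarrow(f(x,\kappa_T(x,r)),r)\in\mathcal T$, $x\in\mathcal X$, $\kappa_T(x,r)\in\mathcal U$. (d) $(\bar x_r,r)\in\operatorname{int}\mathcal T$ for all $r\in\mathcal R_\epsilon$. (e) $\zeta^*$ is Lipschitz continuous. Paths: a feasible path for $(x_0,r)$, $r\in\mathcal R_\epsilon$, is $\{p(s):s\in[0,1]\}$ with $p:[0,1]\to\mathcal R_\epsilon$ continuous, $(x_0,p(0))\in\Gamma$, $p(1)=r$; $\mathcal D_x(r)$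 is the set of $x_0$ for which such a path exists. (A3) For such $(x_0,r)$ the planner returns a feasible path. With $p$ fixed: $\tilde{\mathcal T}=\{(x,s):(x,p(s))\in\mathcal T\}$, $\tilde\Gamma=\{(x,s):(x,p(s))\in\Gamma\}$, $\tilde\xi_N^*(x,s)=\xi_N^*(x,p(s))$, $\tilde\kappa(x,s)=\kappa(x,p(s))$, and $g(\xi)=\max\{s\in[0,1]:(\xi,s)\in\tilde{\mathcal T}\}$. *)

(* Defs.v *)
From HB Require Import structures.
From mathcomp Require Import all_boot all_order all_algebra.
From mathcomp Require Import all_classical all_reals all_analysis.
Set Implicit Arguments. Unset Strict Implicit. Unset Printing Implicit Defensive.
Import Order.TTheory GRing.Theory Num.Theory.
Import numFieldNormedType.Exports.
Local Open Scope classical_set_scope.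
Local Open Scope ring_scope.

Definition constr_set (R : realType) n m (h : 'rV[R]_n -> 'rV[R]_m)
  : set 'rV[R]_n := [set x | forall i, h x ord0 i <= 0].

Definition Reps (R : realType) nx nu nr mx mu (Rset : set 'rV[R]_nr)
  (xbar : 'rV[R]_nr -> 'rV[R]_nx) (ubar : 'rV[R]_nr -> 'rV[R]_nu)
  (hx : 'rV[R]_nx -> 'rV[R]_mx) (hu : 'rV[R]_nu -> 'rV[R]_mu) (eps : R)
  : set 'rV[R]_nr :=
  [set r | Rset r /\ (forall i, hx (xbar r) ord0 i <= - eps)
                  /\ (forall i, hu (ubar r) ord0 i <= - eps)].

Definition locally_lipschitz2 (R : realType) nx nu
  (f : 'rV[R]_nx -> 'rV[R]_nu -> 'rV[R]_nx) : Prop :=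
  forall x u, exists2 d : R, 0 < d & exists L : R,
    forall x1 x2 u1 u2, `|x1 - x| < d -> `|x2 - x| < d ->
      `|u1 - u| < d -> `|u2 - u| < d ->
      `|f x1 u1 - f x2 u2| <= L * (`|x1 - x2| + `|u1 - u2|).

Definition unif_cont3_on (R : realType) a b c
  (D : 'rV[R]_a -> 'rV[R]_b -> 'rV[R]_c -> Prop)
  (l : 'rV[R]_a -> 'rV[R]_b -> 'rV[R]_c -> R) : Prop :=
  forall e : R, 0 < e -> exists2 d : R, 0 < d &
    forall x1 u1 r1 x2 u2 r2, D x1 u1 r1 -> D x2 u2 r2 ->
      `|x1 - x2| < d -> `|u1 - u2| < d -> `|r1 - r2| < d ->
      `|l x1 u1 r1 - l x2 u2 r2| < e.

Definition unif_cont2_on (R : realType) a c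
  (D : set ('rV[R]_a * 'rV[R]_c)) (V : 'rV[R]_a -> 'rV[R]_c -> R) : Prop :=
  forall e : R, 0 < e -> exists2 d : R, 0 < d &
    forall x1 r1 x2 r2, D (x1, r1) -> D (x2, r2) ->
      `|x1 - x2| < d -> `|r1 - r2| < d -> `|V x1 r1 - V x2 r2| < e.

Definition K_infty (R : realType) (g : R -> R) : Prop :=
  g 0 = 0 /\ {within [set s : R | 0 <= s], continuous g} /\
  (forall a b, 0 <= a -> a < b -> g a < g b) /\
  (forall M : R, exists2 a, 0 <= a & M < g a).

(* Feasibility of the candidate (xi_0..xi_N, mu_0..mu_{N-1}) for the OCP at (x,r).
   Sequences are indexed by nat; only indices <= N (states), < N (inputs) matter. *)
Definition ocp_feasible (R : realType) nx nu nr
  (f : 'rV[R]_nx -> 'rV[R]_nu -> 'rV[R]_nx) (X : set 'rV[R]_nx)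
  (U : set 'rV[R]_nu) (T : set ('rV[R]_nx * 'rV[R]_nr)) (N : nat)
  (x : 'rV[R]_nx) (r : 'rV[R]_nr)
  (xi : nat -> 'rV[R]_nx) (mu : nat -> 'rV[R]_nu) : Prop :=
  xi 0%N = x /\
  (forall i, (i < N)%N -> xi i.+1 = f (xi i) (mu i) /\ X (xi i) /\ U (mu i)) /\
  T (xi N, r).

Definition ocp_cost (R : realType) nx nu nr
  (l : 'rV[R]_nx -> 'rV[R]_nu -> 'rV[R]_nr -> R)
  (V : 'rV[R]_nx -> 'rV[R]_nr -> R) (N : nat) (r : 'rV[R]_nr)
  (xi : nat -> 'rV[R]_nx) (mu : nat -> 'rV[R]_nu) : R :=
  V (xi N) r + \sum_(i < N) l (xi i) (mu i) r.

Definition Gamma_set (R : realType) nx nu nr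
  (f : 'rV[R]_nx -> 'rV[R]_nu -> 'rV[R]_nx) (X : set 'rV[R]_nx)
  (U : set 'rV[R]_nu) (Re : set 'rV[R]_nr) (T : set ('rV[R]_nx * 'rV[R]_nr))
  (N : nat) : set ('rV[R]_nx * 'rV[R]_nr) :=
  [set xr | X xr.1 /\ Re xr.2 /\
            exists xi mu, ocp_feasible f X U T N xr.1 xr.2 xi mu].

(* s is the value g(xi) = max {s in [0,1] : (xi, p(s)) in T}
   (i.e. (xi,s) in tilde T), read as "the maximum exists and equals s". *)
Definition is_g (R : realType) nx nr (T : set ('rV[R]_nx * 'rV[R]_nr))
  (p : R -> 'rV[R]_nr) (xi : 'rV[R]_nx) (s : R) : Prop :=
  (0 <= s <= 1) /\ T (xi, p s) /\
  (forall s', 0 <= s' <= 1 -> T (xi, p s') -> s' <= s).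

(* Main.v *)
Require Import Defs.
From HB Require Import structures.
From mathcomp Require Import all_boot all_order all_algebra.
From mathcomp Require Import all_classical all_reals all_analysis.
Import Order.TTheory GRing.Theory Num.Theory.
Import numFieldNormedType.Exports.
Local Open Scope classical_set_scope.
Local Open Scope ring_scope.

From mathcomp Require Import ring lra.

Section Helpers.
Set Implicit Arguments. Unset Strict Implicit.

Lemma int_ball (R : realType) n m (T : set ('rV[R]_n * 'rV[R]_m)) a b :
  interior T (a, b) ->
  exists2 rho : R, 0 < rho &
    forall y q, `|a - y| < rho -> `|b - q| < rho -> T (y, q).
Proof.
move=> /nbhs_ballP [e e0 H]; exists e => // y q hy hq; apply: H.
split => /=; by rewrite -ball_normE.
Qed.

Lemma within_ed (R : realType) (U V : normedModType R) (A : set U)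
  (f : U -> V) a :
  {within A, continuous f} -> A a -> forall e, 0 < e ->
  exists2 d : R, 0 < d & forall y, A y -> `|a - y| < d -> `|f a - f y| < e.
Proof.
move=> H Aa e e0.
have := H a. rewrite /continuous_at.
move=> /(_ (ball (f a) e)).
have : nbhs (f a) (ball (f a) e) by apply: nbhsx_ballx.
move=> hb /(_ hb) hn.
have : within A (nbhs a) (f @^-1` ball (f a) e).
  by rewrite nbhs_subspace_in //; exact: hn.
rewrite /within => /nbhs_ballP [d d0 hd].
exists d => // y Ay ay. have := hd y. rewrite /= -ball_normE => /(_ ay Ay).
by rewrite -ball_normE.
Qed.

Definition sxi (R : realType) nx nu (f : 'rV[R]_nx -> 'rV[R]_nu -> 'rV[R]_nx)
  (N : nat) (xi : nat -> 'rV[R]_nx) (k : 'rV[R]_nu) (i : nat) :=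
  if (i == N)%N then f (xi N) k else xi i.+1.
Definition smu (R : realType) nu (N : nat) (mu : nat -> 'rV[R]_nu)
  (k : 'rV[R]_nu) (i : nat) :=
  if (i.+1 == N)%N then k else mu i.+1.

Lemma shift_feas (R : realType) nx nu nr
  (f : 'rV[R]_nx -> 'rV[R]_nu -> 'rV[R]_nx) (X : set 'rV[R]_nx)
  (U : set 'rV[R]_nu) (T : set ('rV[R]_nx * 'rV[R]_nr)) (N : nat)
  x r r' xi mu k : (0 < N)%N -> ocp_feasible f X U T N x r xi mu ->
  T (f (xi N) k, r') -> X (xi N) -> U k ->
  ocp_feasible f X U T N (xi 1%N) r' (sxi f N xi k) (smu N mu k).
Proof.
move=> N0 [h0 [hs hT]] T2 XN Uk; split.
  by rewrite /sxi; case: N N0 hs hT {T2 XN} => // n _ /(_ 0%N isT) [] ->; rewrite h0.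
split; last by rewrite /sxi /=; case: eqP.
move=> i iN; rewrite /sxi /smu (ltn_eqF iN).
case: (eqVneq i.+1 N) => [e|ne].
  by rewrite e.
have iN' : (i.+1 < N)%N by rewrite ltn_neqAle ne iN.
by apply: hs.
Qed.

Lemma cost_shift (R : realType) nx nu nr
  (f : 'rV[R]_nx -> 'rV[R]_nu -> 'rV[R]_nx)
  (l : 'rV[R]_nx -> 'rV[R]_nu -> 'rV[R]_nr -> R)
  (V : 'rV[R]_nx -> 'rV[R]_nr -> R) n r xi mu k :
  ocp_cost l V n.+1 r (sxi f n.+1 xi k) (smu n.+1 mu k) =
  V (f (xi n.+1) k) r +
  (\sum_(i < n) l (xi i.+1) (mu i.+1) r + l (xi n.+1) k r).
Proof.
rewrite /ocp_cost big_ord_recr /= /sxi /smu eqxx.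
have -> : (n == n.+1)%N = false by elim: n.
congr (_ + (_ + _)); apply: eq_bigr => i _.
have := ltn_ord i => iN.
by rewrite eqSS (ltn_eqF iN) (ltn_eqF (ltn_trans iN (ltnSn _))).
Qed.

Lemma cost_split (R : realType) nx nu nr
  (l : 'rV[R]_nx -> 'rV[R]_nu -> 'rV[R]_nr -> R)
  (V : 'rV[R]_nx -> 'rV[R]_nr -> R) n r xi mu :
  ocp_cost l V n.+1 r xi mu =
  V (xi n.+1) r + (l (xi 0%N) (mu 0%N) r + \sum_(i < n) l (xi i.+1) (mu i.+1) r).
Proof. by rewrite /ocp_cost big_ord_recl. Qed.

End Helpers.

Theorem lemma8 (R : realType) (nx nu nr mx mu : nat)
  (f : 'rV[R]_nx -> 'rV[R]_nu -> 'rV[R]_nx)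
  (hx : 'rV[R]_nx -> 'rV[R]_mx) (hu : 'rV[R]_nu -> 'rV[R]_mu)
  (Rset : set 'rV[R]_nr)
  (xbar : 'rV[R]_nr -> 'rV[R]_nx) (ubar : 'rV[R]_nr -> 'rV[R]_nu)
  (eps : R) (N : nat)
  (l : 'rV[R]_nx -> 'rV[R]_nu -> 'rV[R]_nr -> R)
  (T : set ('rV[R]_nx * 'rV[R]_nr)) (V : 'rV[R]_nx -> 'rV[R]_nr -> R)
  (kappaT : 'rV[R]_nx -> 'rV[R]_nr -> 'rV[R]_nu)
  (gamma_l : R -> R)
  (zx : 'rV[R]_nx -> 'rV[R]_nr -> nat -> 'rV[R]_nx)
  (zu : 'rV[R]_nx -> 'rV[R]_nr -> nat -> 'rV[R]_nu)
  (r : 'rV[R]_nr) (x0 : 'rV[R]_nx) (p : R -> 'rV[R]_nr)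
  (s0 : R) (x : nat -> 'rV[R]_nx) (s : nat -> R) :
  let X := constr_set hx in
  let U := constr_set hu in
  let Re := Reps Rset xbar ubar hx hu eps in
  let Gam := Gamma_set f X U Re T N in
  (* (A1) *)
  locally_lipschitz2 f ->
  continuous hx -> continuous hu ->
  {within Rset, continuous xbar} -> {within Rset, continuous ubar} ->
  (forall r', Rset r' -> X (xbar r') /\ U (ubar r') /\
                         xbar r' = f (xbar r') (ubar r')) ->
  0 < eps ->
  (* MPC data *)
  (0 < N)%N ->
  (forall x' u' r', X x' -> U u' -> Re r' -> 0 <= l x' u' r') ->
  (forall xr, T xr -> X xr.1 /\ Rset xr.2) ->
  (forall xr, T xr -> 0 <= V xr.1 xr.2) ->
  (* zeta* = (zx, zu) is a minimizer of the OCP on Gamma *)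
  (forall x' r', Gam (x', r') ->
     ocp_feasible f X U T N x' r' (zx x' r') (zu x' r') /\
     forall xi mu', ocp_feasible f X U T N x' r' xi mu' ->
       ocp_cost l V N r' (zx x' r') (zu x' r') <= ocp_cost l V N r' xi mu') ->
  (* (A2)(a) *)
  unif_cont3_on (fun x' u' r' => X x' /\ U u' /\ Re r') l ->
  (forall r', Re r' -> l (xbar r') (ubar r') r' = 0) ->
  K_infty gamma_l ->
  (forall x' u' r', Gam (x', r') -> U u' ->
     gamma_l `|x' - xbar r'| <= l x' u' r') ->
  (* (A2)(b) *)
  unif_cont2_on T V ->
  (forall r', Re r' -> V (xbar r') r' = 0) ->
  (forall x' r', T (x', r') ->
     V (f x' (kappaT x' r')) r' - V x' r' <= - l x' (kappaT x' r') r') ->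
  (* (A2)(c) *)
  (forall x' r', T (x', r') ->
     T (f x' (kappaT x' r'), r') /\ X x' /\ U (kappaT x' r')) ->
  (* (A2)(d) *)
  (forall r', Re r' -> (interior T) (xbar r', r')) ->
  (* (A2)(e): zeta* Lipschitz continuous (on Gamma) *)
  (exists L : R, forall x1 r1 x2 r2, Gam (x1, r1) -> Gam (x2, r2) ->
     (forall i, (i <= N)%N ->
        `|zx x1 r1 i - zx x2 r2 i| <= L * (`|x1 - x2| + `|r1 - r2|)) /\
     (forall i, (i < N)%N ->
        `|zu x1 r1 i - zu x2 r2 i| <= L * (`|x1 - x2| + `|r1 - r2|))) ->
  (* r in R_eps, and (A3): p is a feasible path for (x0, r) *)
  Re r ->
  {within [set t : R | 0 <= t <= 1], continuous p} ->
  (forall t, 0 <= t <= 1 -> Re (p t)) ->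
  Gam (x0, p 0) -> p 1 = r ->
  (* initial condition (x0, s0) in tilde Gamma *)
  0 <= s0 <= 1 -> Gam (x0, p s0) ->
  (* closed-loop PathFG+MPC trajectory *)
  x 0%N = x0 -> s 0%N = s0 ->
  (forall k, is_g T p (zx (x k) (p (s k)) N) (s k.+1) /\
             x k.+1 = f (x k) (zu (x k) (p (s k)) 0%N)) ->
  exists kM : nat, forall k, (kM.+1 <= k)%N -> s k = 1.
Proof.
move=> X U Re Gam Hlip hxc huc xbc ubc Hbar eps0 N0 l0 TX V0 Hopt lunif lbar
  Kg lowl Vunif Vbar Vdec Tinv Tint [L HL] Rer pc prange Gp0 p1 s0b Gs0 x0e s0e
  Htraj.
case: Kg => g0 [_ [gmono _]].
have gle : forall a b, 0 <= a -> a <= b -> gamma_l a <= gamma_l b.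
  move=> a b a0; rewrite le_eqVlt => /orP [/eqP -> // | ab]; exact/ltW/gmono.
have gpos : forall a, 0 < a -> 0 < gamma_l a.
  by move=> a a0; rewrite -g0; apply: gmono.
have GT : forall y q, T (y, q) -> Re q -> Gam (y, q).
  move=> y q Tyq Rq; split; first by case: (TX _ Tyq).
  split => //.
  pose tr i := iter i (fun z => f z (kappaT z q)) y.
  have Ttr : forall i, T (tr i, q).
    by elim=> [|i IH] //=; case: (Tinv _ _ IH).
  exists tr, (fun i => kappaT (tr i) q); split => //; split => // i _.
  by case: (Tinv _ _ (Ttr i)) => _ [].
have Gbar : forall q, Re q -> Gam (xbar q, q).
  move=> q Rq; apply: GT => //; exact: (nbhs_singleton (Tint q Rq)).
have Zbar : forall q, Re q -> zx (xbar q) q N = xbar q.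
  move=> q Rq.
  have Rs : Rset q by case: Rq.
  have [Xb [Ub fb]] := Hbar q Rs.
  have Tb : T (xbar q, q) by apply: (nbhs_singleton (Tint q Rq)).
  have [[zf0 [zfs zfT]] zopt] := Hopt _ _ (Gbar q Rq).
  have cfe : ocp_feasible f X U T N (xbar q) q (fun _ => xbar q) (fun _ => ubar q).
    by split => //; split => // i _; split.
  have e0 : \sum_(i < N) l (xbar q) (ubar q) q = 0.
    by rewrite big1 // => i _; apply: lbar.
  have := zopt _ _ cfe. rewrite /ocp_cost Vbar // e0 addr0.
  set xi := zx _ _; set mm := zu _ _ => hc.
  have sge : 0 <= \sum_(i < N) l (xi i) (mm i) q.
    apply: sumr_ge0 => i _; apply: l0 => //; by case: (zfs i (ltn_ord i)) => _ [].
  have [Tn [XN Uk]] := Tinv _ _ zfT.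
  have a := Vdec _ _ zfT. have b := V0 _ Tn. have c := V0 _ zfT.
  rewrite /= in b c.
  have lk : l (xi N) (kappaT (xi N) q) q <= 0 by lra.
  have hg := lowl _ _ _ (GT _ _ zfT Rq) Uk.
  have h : gamma_l `|xi N - xbar q| <= 0 by apply: le_trans hg lk.
  apply/eqP; rewrite -subr_eq0 -normr_eq0; apply/negPn/negP => hne.
  have : 0 < gamma_l `|xi N - xbar q| by apply: gpos; rewrite lt_neqAle eq_sym hne normr_ge0.
  by rewrite ltNge h.
have [n Nn] : exists n, N = n.+1 by exists N.-1; rewrite prednK.
subst N.
have XfromF : forall y q xi mu, ocp_feasible f X U T n.+1 y q xi mu -> X y.
  move=> y q xi mm [<- [hs _]]; by case: (hs 0%N N0) => _ [].
have inv : forall k, (0 <= s k <= 1) /\ Gam (x k, p (s k)).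
  elim=> [|k [sk Gk]]; first by rewrite x0e s0e.
  have [Fk _] := Hopt _ _ Gk.
  have [[sb [Tg _]] xe] := Htraj k.
  split => //.
  set xi := zx _ _ in Fk Tg xe *; set mm := zu _ _ in Fk xe *.
  have [Tn [XN Uk]] := Tinv _ _ Tg.
  have Fs := shift_feas N0 Fk Tn XN Uk.
  have x1 : x k.+1 = xi 1%N.
    case: Fk => h0 [hs _]; rewrite xe; case: (hs 0%N N0) => -> _; by rewrite h0.
  split; first by rewrite x1; exact: XfromF Fs.
  split; first exact: prange.
  by exists (sxi f n.+1 xi (kappaT (xi n.+1) (p (s k.+1)))), (smu n.+1 mm (kappaT (xi n.+1) (p (s k.+1)))); rewrite x1.
have mono1 : forall k, s k <= s k.+1.
  move=> k; have [sk Gk] := inv k; have [[_ [_ zfT]] _] := Hopt _ _ Gk.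
  by have [[_ [_ H]] _] := Htraj k; apply: H.
have mono : forall k m, (k <= m)%N -> s k <= s m.
  move=> k m /subnK <-; elim: (m - k)%N => [|j IH]; first by rewrite add0n.
  by rewrite addSn; apply: le_trans IH (mono1 _).
case: (pselect (exists m, s m = 1)) => [[m sm]|nos].
  exists m => k mk; apply/eqP; rewrite eq_le; have [/andP[_ ->] _] := inv k.
  by rewrite -sm mono // ltnW.
exfalso.
pose E := range s.
have hs : has_sup E.
  split; first by exists (s 0%N), 0%N.
  by exists 1 => _ [k _ <-]; have [/andP[_ ->] _] := inv k.
set ss := sup E.
have sub : forall k, s k <= ss by move=> k; apply: sup_upper_bound => //; exists k.
have ss1 : ss <= 1.
  apply: ge_sup; first by case: hs.
  by move=> _ [k _ <-]; have [/andP[_ ->] _] := inv k.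
have ss0 : 0 <= ss by apply: le_trans (sub 0%N); have [/andP[-> _] _] := inv 0%N.
have ssb : 0 <= ss <= 1 by rewrite ss0 ss1.
set rs := p ss.
have Rrs : Re rs := prange _ ssb.
have [rho rho0 Hrho] := int_ball (Tint _ Rrs).
have [d1 d10 Hd1] := within_ed pc ssb rho0.
have Rss : Rset rs by case: Rrs.
have rho20 : 0 < rho / 2 by lra.
have [dx dx0 Hdx] := within_ed xbc Rss rho20.
have [d2 d20 Hd2] := within_ed pc ssb dx0.
have L1 : 0 < `|L| + 1 by rewrite ltr_pwDr ?normr_ge0.
pose eta := rho / (2 * (`|L| + 1)).
have eta0 : 0 < eta by rewrite divr_gt0 // mulr_gt0.
have etaL : (`|L| + 1) * eta = rho / 2.
  by rewrite /eta; field; rewrite gt_eqF.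
pose c := gamma_l eta.
have c0 : 0 < c by apply: gpos.
have N0r : 0 < (n.+1%:R : R) by rewrite ltr0n.
pose e0 := c / (2 * n.+1%:R).
have e00 : 0 < e0 by rewrite divr_gt0 // mulr_gt0.
have Ne0 : (n%:R + 1) * e0 = c / 2.
  by rewrite /e0 -natr1; field; rewrite addrC natr1 pnatr_eq0.
have [dl dl0 Hdl] := lunif e0 e00.
have [dV dV0 HdV] := Vunif e0 e00.
have dm0 : 0 < Num.min dl dV / 2 by rewrite divr_gt0 // lt_min dl0 dV0.
have [d3 d30 Hd3] := within_ed pc ssb dm0.
pose d := Num.min d1 (Num.min d2 d3).
have d0 : 0 < d by rewrite /d !lt_min d10 d20 d30.
have [_ [K _ <-] hK] := sup_adherent d0 hs.
have close : forall k, (K <= k)%N -> 0 <= s k <= 1 /\ `|ss - s k| < d.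
  move=> k Kk; have [sb _] := inv k; split => //.
  have := mono _ _ Kk; have := sub k => h1 h2.
  rewrite -/ss in hK; rewrite ger0_norm; [lra | lra].
have dd1 : d <= d1 by rewrite /d ge_min lexx.
have dd2 : d <= d2 by rewrite /d !ge_min lexx /= orbT.
have dd3 : d <= d3 by rewrite /d !ge_min lexx /= !orbT.
pose J k := ocp_cost l V n.+1 (p (s k)) (zx (x k) (p (s k))) (zu (x k) (p (s k))).
have Jnn : forall k, 0 <= J k.
  move=> k; have [sb Gk] := inv k; have [[_ [zfs zfT]] _] := Hopt _ _ Gk.
  rewrite /J /ocp_cost; apply: addr_ge0; first exact: (V0 _ zfT).
  apply: sumr_ge0 => i _; case: (zfs i (ltn_ord i)) => _ [Xi Ui].
  by apply: l0 => //; exact: prange.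
have Ne0' : e0 *+ n + e0 = c / 2 by rewrite -Ne0 -mulr_natl mulrDl mul1r.
have key : exists2 k, (K <= k)%N & `|x k - xbar (p (s k))| < eta.
  case: (pselect (exists2 k, (K <= k)%N & `|x k - xbar (p (s k))| < eta)) => // nk.
  have far : forall k, (K <= k)%N -> eta <= `|x k - xbar (p (s k))|.
    move=> k Kk; rewrite leNgt; apply/negP => h; apply: nk; by exists k.
  have dec : forall k, (K <= k)%N -> J k.+1 <= J k - c / 2.
    move=> k Kk.
    have [sb Gk] := inv k; have [sb' Gk'] := inv k.+1.
    have [Fk _] := Hopt _ _ Gk.
    have [[_ [Tg _]] xe] := Htraj k.
    have [_ opt'] := Hopt _ _ Gk'.
    move: (close _ Kk) (close _ (leqW Kk)) => [_ ck] [_ ck'].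
    have Rr := prange _ sb; have Rr' := prange _ sb'.
    rewrite /J.
    have hr : `|p (s k.+1) - p (s k)| < Num.min dl dV.
      apply: le_lt_trans (ler_distD rs _ _) _.
      rewrite (distrC (p (s k.+1))).
      have a1 := Hd3 _ sb (lt_le_trans ck dd3).
      have a2 := Hd3 _ sb' (lt_le_trans ck' dd3).
      rewrite -/rs in a1 a2; lra.
    move: (far k Kk) => hf.
    move: Fk Tg xe opt' Gk Rr Rr' hr hf.
    move: (ocp_cost l V n.+1 (p (s k.+1)) (zx (x k.+1) (p (s k.+1))) (zu (x k.+1) (p (s k.+1)))).
    move: (zx (x k) (p (s k))) (zu (x k) (p (s k))).
    move: (p (s k)) (p (s k.+1)) => r1 r2 xi mm Jn.
    move=> Fk Tg xe opt' Gk Rr Rr' hr hf.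
    have [Tn [XN Uk]] := Tinv _ _ Tg.
    have Fs := shift_feas N0 Fk Tn XN Uk.
    have x1 : x k.+1 = xi 1%N.
      case: Fk => h0 [hss _]; rewrite xe; case: (hss 0%N N0) => -> _; by rewrite h0.
    rewrite -x1 in Fs.
    have o := opt' _ _ Fs.
    rewrite cost_shift in o.
    have vd := Vdec _ _ Tg.
    rewrite cost_split.
    have hrl : `|r2 - r1| < dl by apply: lt_le_trans hr _; rewrite ge_min lexx.
    have hrV : `|r2 - r1| < dV by apply: lt_le_trans hr _; rewrite ge_min lexx orbT.
    case: Fk => h0 [hss hT].
    have hv : V (xi n.+1) r2 - V (xi n.+1) r1 <= e0.
      have := HdV _ _ _ _ Tg hT; rewrite subrr normr0 => /(_ dV0 hrV) /ltW.
      by apply: le_trans; apply: ler_norm.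
    have hsum : \sum_(i < n) l (xi i.+1) (mm i.+1) r2 <=
                \sum_(i < n) l (xi i.+1) (mm i.+1) r1 + e0 *+ n.
      apply: le_trans (_ : _ <= \sum_(i < n) (l (xi i.+1) (mm i.+1) r1 + e0)) _.
        apply: ler_sum => i _.
        have [_ [Xi Ui]] := hss i.+1 (ltn_ord i).
        have := Hdl _ _ _ _ _ _ (conj Xi (conj Ui Rr')) (conj Xi (conj Ui Rr)).
        rewrite !subrr !normr0 => /(_ dl0 dl0 hrl) /ltW hh.
        have := le_trans (ler_norm _) hh; lra.
      by rewrite big_split /= sumr_const card_ord.
    have hl : c <= l (xi 0%N) (mm 0%N) r1.
      have [_ [_ U0]] := hss 0%N N0.
      rewrite h0; apply: le_trans (lowl _ _ _ Gk U0).
      by apply: gle => //; exact: ltW.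
    lra.
  have it : forall m, J (K + m)%N <= J K - m%:R * (c / 2).
    elim=> [|m IH]; first by rewrite addn0 mul0r subr0.
    have e : (m.+1%:R : R) = m%:R + 1 by rewrite -natr1.
    have := dec (K + m)%N (leq_addr _ _); rewrite addnS e mulrDl mul1r; lra.
  have c20 : 0 < c / 2 by lra.
  have hb := archi_boundP (divr_ge0 (Jnn K) (ltW c20)).
  rewrite ltr_pdivrMr // in hb.
  have := it (Num.bound (J K / (c / 2))); have := Jnn (K + Num.bound (J K / (c / 2)))%N.
  lra.
have [k Kk hk] := key.
have [sb Gk] := inv k.
have [_ ck] := close _ Kk.
have [[_ [_ gmax]] _] := Htraj k.
move: hk Gk gmax sb ck; set q := p (s k) => hk Gk gmax sb ck.
have Rq : Re q := prange _ sb.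
have [HLx _] := HL _ _ _ _ Gk (Gbar q Rq).
have hxi := HLx n.+1 (leqnn _).
rewrite Zbar // subrr normr0 addr0 in hxi.
move: hxi gmax; set xi := zx (x k) q n.+1 => hxi gmax.
have hLa : L * `|x k - xbar q| <= `|L| * eta.
  apply: le_trans (_ : _ <= `|L| * `|x k - xbar q|) _.
    by apply: ler_wpM2r; [exact: normr_ge0 | exact: ler_norm].
  by apply: ler_wpM2l; [exact: normr_ge0 | exact: ltW].
have hLe : `|L| * eta < rho / 2 by rewrite -etaL mulrDl mul1r ltrDl.
have h1 : `|xi - xbar q| < rho / 2 by lra.
have h2 : `|xbar rs - xbar q| < rho / 2.
  apply: Hdx; first by case: Rq.
  by apply: Hd2 => //; apply: lt_le_trans ck dd2.
have h3 : `|xbar rs - xi| < rho.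
  apply: le_lt_trans (ler_distD (xbar q) _ _) _; rewrite (distrC (xbar q)); lra.
have [t [tb [td ht]]] : exists t, (0 <= t <= 1) /\ `|ss - t| < d1 /\ (t <= ss -> t = 1).
  case: (lerP (ss + d1 / 2) 1) => h.
    exists (ss + d1 / 2); split; first by apply/andP; split; lra.
    split; last by move=> hh; exfalso; lra.
    rewrite opprD addrA subrr add0r normrN ger0_norm; lra.
  exists 1; split; first by rewrite ler01 lexx.
  split => //; rewrite ler0_norm; lra.
have Tt : T (xi, p t) by apply: Hrho => //; apply: Hd1.
have tle := gmax t tb Tt.
have sle := sub k.+1.
have t1 : t = 1 by apply: ht; lra.
apply: nos; exists k.+1; apply/eqP; rewrite eq_le; apply/andP; split.
  by have [/andP[_ ->] _] := inv k.+1.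
by rewrite -t1.
Qed.
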